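(* For any finite set $P\subset\mathbb{R}^1$ containing the source $s$, any integer $k\ge 1$ and any $\alpha>1$, the canonical range assignment satisfies $$\mathrm{cost}_\alpha(\rho_k(P))\le\Big(1+\frac{2^\alpha}{k^{\alpha-1}}\Big)\cdot\mathrm{cost}_\alpha(\rho_{\mathrm{opt}}(P)).$$
   Context: Setting: points in $\mathbb{R}^1$; a range assignment $\rho$ on a finite set $P$ containing source $s$ induces the directed graph with edge $(p,q)$ iff $|pq|\le\rho(p)$; feasible if this graph contains an arborescence rooted at $s$ spanning $P$; $\mathrm{cost}_\alpha(\rho(P))=\sum_{p\in P}\rho(p)^\alpha$. Write $P=L\cup\{s\}\cup R$, $L=\{\ell_1,\dots,\ell_{|L|}\}$ left of $s$ and $R=\{r_1,\dots,r_{|R|}\}$ right of $s$, numbered by increasing distance from $s$; $\ell_{|L|},r_{|R|}$ are extreme. Successor: $r_i\mapsto r_{i+1}$, $\ell_i\mapsto\ell_{i+1}$, $s$ has successors $r_1,\ell_1$, extreme points have none. A chain is a path using only edges from a point to its successor. The standard range $\rho_{\mathrm{st}}(p)$ of a non-extreme $p\ne s$ is its distance to its successor, $0$ for extreme points; $s$ has standard ranges $|s\ell_1|,|sr_1|$. A zero-range point is a non-extreme point with range $0$. In a broadcast tree $\mathcal{B}$ (arborescence rooted at $s$) a point of $R\cup L$ is root-crossing if it has a child on the other side of $s$; $s$ is root-crossing if it has children in both $L$ and $R$. $\rho_{\mathrm{opt}}(P)$: if all of $P\setminus\{s\}$ lies on one side of $s$, every point gets its standard range; otherwise $\rho_{\mathrm{opt}}$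 is a minimum-cost feasible assignment whose graph contains a broadcast tree with a single root-crossing point $p^*$, a chain from $s$ to $p^*$, all points within reach of $p^*$ except those on that chain being children of $p^*$, and chains from the rightmost (resp. leftmost) point within reach of $p^*$ to $r_{|R|}$ (resp. $\ell_{|L|}$). Canonical assignment $\rho_k$: if all points lie on one side of $s$, $\rho_k=\rho_{\mathrm{opt}}$; otherwise, with $Z$ the zero-range points of $\rho_{\mathrm{opt}}(P)$ and $Z_k=Z$ if $|Z|\le k$, else $Z_k$ the $k$ points of $Z$ with largest standard ranges (ties arbitrary), set $\rho_k=\rho_{\mathrm{opt}}$ on $P\setminus Z$, $\rho_k=0$ on $Z_k$, $\rho_k=\rho_{\mathrm{st}}$ on $Z\setminus Z_k$. *)

(* Defs.v *)
From mathcomp Require Import all_boot all_order all_algebra.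
From mathcomp Require Import all_classical all_reals exp.
Set Implicit Arguments. Unset Strict Implicit. Unset Printing Implicit Defensive.
Import Order.TTheory GRing.Theory Num.Theory.
Local Open Scope ring_scope.

Section Defs.
Variable R : realType.
Implicit Types (P : seq R) (s p q : R) (rho : R -> R).

Definition minseq (xs : seq R) : R :=
  if xs is x :: xs' then foldr Num.min x xs' else 0.

Definition nonextreme P s p : bool :=
  ((s < p) && has (fun q => p < q) P) || ((p < s) && has (fun q => q < p) P).

(* standard range of p <> s : distance to its successor, 0 if extreme *)
Definition st_range P s p : R :=
  if s < p then minseq [seq q - p | q <- P & p < q]
  else if p < s then minseq [seq p - q | q <- P & q < p]
  else 0.

(* b is a successor of a (s has two successors r_1 and l_1) *)
Definition succ_edge P s a b : Prop :=
  a \in P /\ b \in P /\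
  ((s <= a /\ a < b /\ forall x, x \in P -> ~ (a < x /\ x < b)) \/
   (b < a /\ a <= s /\ forall x, x \in P -> ~ (b < x /\ x < a))).

Definition cost (alpha : R) P rho : R := \sum_(p <- P) (rho p) `^ alpha.

Definition edge rho p q : bool := `|p - q| <= rho p.

(* broadcast tree: arborescence rooted at s spanning P in the graph of rho,
   given by its parent function *)
Definition btree P s rho (par : R -> R) : Prop :=
  forall q, q \in P -> q != s ->
    [/\ par q \in P, edge rho (par q) q & exists n, iter n par q = s].

Definition range_assignment P rho : Prop := forall p, p \in P -> 0 <= rho p.

Definition feasible P s rho : Prop :=
  range_assignment P rho /\ exists par, btree P s rho par.

Definition min_cost_feasible (alpha : R) P s rho : Prop :=
  feasible P s rho /\
  forall rho', feasible P s rho' -> cost alpha P rho <= cost alpha P rho'.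

Definition one_sided P s : bool :=
  all (fun q => q <= s) P || all (fun q => s <= q) P.

Definition is_child P s (par : R -> R) p q : bool :=
  (q \in P) && (q != s) && (par q == p).

Definition root_crossing P s (par : R -> R) p : Prop :=
  p \in P /\
  if p == s then
    (exists q, is_child P s par p q /\ q < s) /\
    (exists q, is_child P s par p q /\ s < q)
  else exists q, is_child P s par p q /\
     ((p < s /\ s < q) \/ (s < p /\ q < s)).

Definition is_rho_opt (alpha : R) P s rho : Prop :=
  if one_sided P s then
    (forall p, p \in P -> p != s -> rho p = st_range P s p) /\
    rho s = minseq [seq `|q - s| | q <- P & q != s]
  else
    min_cost_feasible alpha P s rho /\
    exists par pstar,
      btree P s rho par /\
          root_crossing P s par pstar /\
          (forall p, root_crossing P s par p -> p = pstar) /\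
          (* chain in the tree from s to pstar *)
          (forall q, q \in P -> q != s ->
             (s <= q <= pstar) || (pstar <= q <= s) -> succ_edge P s (par q) q) /\
          (forall q, q \in P -> `|pstar - q| <= rho pstar ->
             ~~ ((s <= q <= pstar) || (pstar <= q <= s)) -> par q = pstar) /\
          (* chain from the rightmost point within reach of pstar to r_|R| *)
          (forall q, q \in P ->
             (forall x, x \in P -> `|pstar - x| <= rho pstar -> x < q) ->
             succ_edge P s (par q) q) /\
          (* chain from the leftmost point within reach of pstar to l_|L| *)
          (forall q, q \in P ->
             (forall x, x \in P -> `|pstar - x| <= rho pstar -> q < x) ->
             succ_edge P s (par q) q).

Definition zero_range P s rho p : bool :=
  [&& p \in P, p != s, nonextreme P s p & rho p == 0].

Definition is_Zk P s rho (k : nat) (Zk : seq R) : Prop :=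
  [/\ uniq Zk, {subset Zk <= zero_range P s rho},
      size Zk = minn k (count (zero_range P s rho) P) &
      forall z z', z \in Zk -> zero_range P s rho z' -> z' \notin Zk ->
        st_range P s z' <= st_range P s z].

Definition rho_k P s rho (Zk : seq R) : R -> R := fun p =>
  if one_sided P s then rho p
  else if p \in Zk then 0
  else if zero_range P s rho p then st_range P s p
  else rho p.

End Defs.

(* Main.v *)
Require Import Defs.
From mathcomp Require Import all_boot all_order all_algebra.
From mathcomp Require Import all_classical all_reals exp.
From mathcomp Require Import lra ring.
Import Order.TTheory GRing.Theory Num.Theory.
Local Open Scope ring_scope.
Set Implicit Arguments. Unset Strict Implicit.

Section Helpers.
Variable R : realType.

Lemma foldr_min_in (x : R) ys : foldr Num.min x ys \in x :: ys.
Proof.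
elim: ys => [|y ys IH] /=; first by rewrite mem_seq1.
rewrite minEle; case: ifP => _; first by rewrite !inE eqxx orbT.
move: IH; rewrite !inE => /orP [->|->] //; by rewrite !orbT.
Qed.


Lemma minseq_in (xs : seq R) : xs != [::] -> minseq xs \in xs.
Proof. case: xs => [|x xs] //= _; exact: foldr_min_in. Qed.

Lemma minseq_le (xs : seq R) z : z \in xs -> minseq xs <= z.
Proof.
case: xs => [|x xs] //=.
elim: xs z => [|y ys IH] z /=; first by rewrite mem_seq1 => /eqP ->.
rewrite ge_min !inE => /or3P [/eqP->|/eqP->|h].
- by rewrite IH ?orbT // inE eqxx.
- by rewrite lexx.
- by rewrite IH ?orbT // inE h orbT.
Qed.


Lemma succR (P : seq R) s z : s < z -> nonextreme P s z ->
  [/\ z + st_range P s z \in P, z < z + st_range P s z &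
      forall q, q \in P -> z < q -> z + st_range P s z <= q].
Proof.
move=> sz; rewrite /nonextreme /st_range sz /= => /orP [/hasP [q0 q0P zq0]|]; last first.
  by case/andP => zs; move: (lt_trans sz zs); rewrite ltxx.
have ne : [seq q - z | q <- P & z < q] != [::].
  apply/eqP => E; have : q0 - z \in [seq q - z | q <- P & z < q] by apply: map_f; rewrite mem_filter zq0 q0P.
  by rewrite E.
have mle := fun q => @minseq_le [seq q - z | q <- P & z < q] (q - z).
have /mapP [q] := minseq_in ne; rewrite mem_filter => /andP [zq qP] E.
rewrite E addrC subrK; split => // q' q'P zq'.
have h : q' - z \in [seq q - z | q <- P & z < q] by apply: map_f; rewrite mem_filter zq' q'P.
by have := mle q' h; rewrite E lerD2r.
Qed.

Lemma succL (P : seq R) s z : z < s -> nonextreme P s z ->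
  [/\ z - st_range P s z \in P, z - st_range P s z < z &
      forall q, q \in P -> q < z -> q <= z - st_range P s z].
Proof.
move=> zs; rewrite /nonextreme /st_range zs /= (lt_gtF zs) /= => /hasP [q0 q0P zq0].
have ne : [seq z - q | q <- P & q < z] != [::].
  apply/eqP => E; have : z - q0 \in [seq z - q | q <- P & q < z] by apply: map_f; rewrite mem_filter zq0 q0P.
  by rewrite E.
have mle := fun q => @minseq_le [seq z - q | q <- P & q < z] (z - q).
have /mapP [q] := minseq_in ne; rewrite mem_filter => /andP [zq qP] E.
rewrite E opprB addrC subrK; split => //.
move=> q' q'P zq'.
have h : z - q' \in [seq z - q | q <- P & q < z] by apply: map_f; rewrite mem_filter zq' q'P.
by have := mle q' h; rewrite E lerD2l lerN2.
Qed.


Lemma gaps (lo hi : R -> R) n : forall (S : seq R) c d, (size S <= n)%N -> uniq S -> c <= d ->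
  (forall z, z \in S -> c <= lo z /\ hi z <= d) ->
  (forall z y, z \in S -> y \in S -> z != y -> hi z <= lo y \/ hi y <= lo z) ->
  \sum_(z <- S) (hi z - lo z) <= d - c.
Proof.
elim: n => [|n IH] [|z S] c d.
all: try (move=> *; rewrite big_nil subr_ge0; done).
  by [].
move=> hs; rewrite cons_uniq => /andP [zS uS] cd Hb Hd.
have [czl hzd] := Hb z (mem_head _ _).
have h1 : \sum_(y <- S | hi y <= lo z) (hi y - lo y) <= lo z - c.
  rewrite -big_filter; apply: IH => //.
  - by rewrite size_filter (leq_trans (count_size _ _)).
  - exact: filter_uniq.
  - move=> y; rewrite mem_filter => /andP [h yS]; split => //.
    by case: (Hb y); rewrite ?inE ?yS ?orbT.
  - move=> y y'; rewrite !mem_filter => /andP [_ yS] /andP [_ y'S].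
    by apply: Hd; rewrite inE ?yS ?y'S orbT.
have h2 : \sum_(y <- S | ~~ (hi y <= lo z)) (hi y - lo y) <= d - hi z.
  rewrite -big_filter; apply: IH => //.
  - by rewrite size_filter (leq_trans (count_size _ _)).
  - exact: filter_uniq.
  - move=> y; rewrite mem_filter => /andP [h yS]; split; last first.
      by case: (Hb y); rewrite ?inE ?yS ?orbT.
    have zy : z != y by apply/eqP => E; rewrite E yS in zS.
    case: (Hd z y (mem_head _ _)) => //; first by rewrite inE yS orbT.
    by move=> h'; rewrite h' in h.
  - move=> y y'; rewrite !mem_filter => /andP [_ yS] /andP [_ y'S].
    by apply: Hd; rewrite inE ?yS ?y'S orbT.
have E : \sum_(i <- S) (hi i - lo i) = \sum_(i <- S | hi i <= lo z) (hi i - lo i) + \sum_(i <- S | ~~ (hi i <= lo z)) (hi i - lo i) by apply: bigID.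
rewrite big_cons E; lra.
Qed.


Definition lo (P : seq R) s z := if s < z then z else z - st_range P s z.
Definition hi (P : seq R) s z := if s < z then z + st_range P s z else z.

Lemma hilo (P : seq R) (s z : R) : hi P s z - lo P s z = st_range P s z.
Proof. rewrite /hi /lo; case: ifP => _; lra. Qed.

Lemma zr_side (P : seq R) (s : R) (rho : R -> R) (z : R) : zero_range P s rho z -> (s < z) || (z < s).
Proof. by case/and4P => _ zs _ _; rewrite orbC -neq_lt. Qed.

Lemma st_gt0 (P : seq R) (s : R) (rho : R -> R) (z : R) : zero_range P s rho z -> 0 < st_range P s z.
Proof.
move=> Z; move: (Z) => /and4P [_ _ ne _].
case/orP: (zr_side Z) => h.
  by case: (succR h ne) => _ h2 _; lra.
by case: (succL h ne) => _ h2 _; lra.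
Qed.

Lemma disj (P : seq R) (s : R) (rho : R -> R) (z y : R) : zero_range P s rho z -> zero_range P s rho y -> z != y ->
  hi P s z <= lo P s y \/ hi P s y <= lo P s z.
Proof.
move=> Zz Zy zy.
move: (Zz) (Zy) => /and4P [zP _ nez _] /and4P [yP _ ney _].
rewrite /hi /lo.
case/orP: (zr_side Zz) => hz; case/orP: (zr_side Zy) => hy.
- rewrite hz hy; case: (succR hz nez) => _ _ mz; case: (succR hy ney) => _ _ my.
  by move: zy; rewrite neq_lt => /orP [h|h]; [left; exact: mz | right; exact: my].
- rewrite hz (lt_gtF hy); right; lra.
- rewrite hy (lt_gtF hz); left; lra.
- rewrite (lt_gtF hz) (lt_gtF hy); case: (succL hz nez) => _ _ mz; case: (succL hy ney) => _ _ my.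
  by move: zy; rewrite neq_lt => /orP [h|h]; [left; exact: my | right; exact: mz].
Qed.


Lemma zr_interval (P : seq R) (s : R) (rho par : R -> R) (ps : R) :
  btree P s rho par ->
  (forall q : R, q \in P -> q != s ->
        (s <= q <= ps) || (ps <= q <= s) -> succ_edge P s (par q) q) ->
  (forall q : R, q \in P ->
        (forall x : R, x \in P -> `|ps - x| <= rho ps -> x < q) ->
        succ_edge P s (par q) q) ->
  (forall q : R, q \in P ->
        (forall x : R, x \in P -> `|ps - x| <= rho ps -> q < x) ->
        succ_edge P s (par q) q) ->
  ps \in P -> 0 <= rho ps ->
  forall z, zero_range P s rho z ->
  ps - rho ps <= lo P s z /\ hi P s z <= ps + rho ps.
Proof.
move=> Hbt Hch HchR HchL psP rs0 z Zz.
move: (Zz) => /and4P [zP zs ne /eqP rz0].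
rewrite /lo /hi.
case/orP: (zr_side Zz) => hz.
- rewrite hz; case: (succR hz ne); set z' := z + _ => z'P zz' z'min.
  have z's : s < z' by apply: lt_trans zz'.
  have z'ns : z' != s by rewrite gt_eqF.
  have nopar : ~ succ_edge P s (par z') z'.
    case=> aP [_ [[sa [az' nb]] | [z'a [as' _]]]]; last by lra.
    have az : par z' = z.
      case: (ltgtP (par z') z) => // h.
      + by exfalso; apply: (nb z zP); split.
      + by have := z'min _ aP h; lra.
    case: (Hbt z' z'P z'ns) => _; rewrite /edge az rz0 normr_le0 subr_eq0 => /eqP E _.
    by move: zz'; rewrite -E ltxx.
  have psz' : ps < z'.
    rewrite ltNge; apply/negP => h; apply: nopar; apply: Hch => //.
    by rewrite (ltW z's) h.
  have [x [xP xr z'x]] : exists x, [/\ x \in P, `|ps - x| <= rho ps & z' <= x].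
    case: (boolP (has (fun x => (`|ps - x| <= rho ps) && (z' <= x)) P)).
      by case/hasP => x xP /andP [h1 h2]; exists x.
    move/hasPn => H; exfalso; apply: nopar; apply: HchR => // x xP xr.
    by move: (H x xP); rewrite xr /= -ltNge.
  have psz : ps <= z.
    rewrite leNgt; apply/negP => zps; have := z'min ps psP zps; lra.
  move: xr; rewrite distrC ler_norml => /andP [_ h]; split; lra.
- rewrite (lt_gtF hz); case: (succL hz ne); set z' := z - _ => z'P zz' z'max.
  have z's : z' < s by apply: lt_trans hz.
  have z'ns : z' != s by rewrite lt_eqF.
  have nopar : ~ succ_edge P s (par z') z'.
    case=> aP [_ [[sa [az' _]] | [z'a [as' nb]]]]; first by lra.
    have az : par z' = z.
      case: (ltgtP (par z') z) => // h.
      + by have := z'max _ aP h; lra.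
      + by exfalso; apply: (nb z zP); split.
    case: (Hbt z' z'P z'ns) => _; rewrite /edge az rz0 normr_le0 subr_eq0 => /eqP E _.
    by move: zz'; rewrite E ltxx.
  have psz' : z' < ps.
    rewrite ltNge; apply/negP => h; apply: nopar; apply: Hch => //.
    by rewrite (ltW z's) h orbT.
  have [x [xP xr z'x]] : exists x, [/\ x \in P, `|ps - x| <= rho ps & x <= z'].
    case: (boolP (has (fun x => (`|ps - x| <= rho ps) && (x <= z')) P)).
      by case/hasP => x xP /andP [h1 h2]; exists x.
    move/hasPn => H; exfalso; apply: nopar; apply: HchL => // x xP xr.
    by move: (H x xP); rewrite xr /= -ltNge.
  have psz : z <= ps.
    rewrite leNgt; apply/negP => zps; have := z'max ps psP zps; lra.
  move: xr; rewrite ler_norml => /andP [_ h]; clearbody z'; split; lra.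
Qed.


Lemma ler_sum_cond (r : seq R) (a b : pred R) (F G : R -> R) :
  (forall x, (if a x then F x else 0) <= (if b x then G x else 0)) ->
  \sum_(x <- r | a x) F x <= \sum_(x <- r | b x) G x.
Proof.
move=> H; elim: r => [|x r IH]; first by rewrite !big_nil.
rewrite !big_cons; have := H x; case: (a x); case: (b x) => h; lra.
Qed.

End Helpers.

Unset Implicit Arguments. Set Strict Implicit.

Theorem lemma2 (R : realType) (P : seq R) (s : R) (k : nat) (alpha : R)
    (rho_opt : R -> R) (Zk : seq R) :
  uniq P -> s \in P -> (1 <= k)%N -> 1 < alpha ->
  is_rho_opt alpha P s rho_opt ->
  is_Zk P s rho_opt k Zk ->
  cost alpha P (rho_k P s rho_opt Zk)
    <= (1 + 2 `^ alpha / (k%:R) `^ (alpha - 1)) * cost alpha P rho_opt.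
Proof.
move=> uP sP k1 a1 Hopt HZk.
set C := cost alpha P rho_opt.
set K := 2 `^ alpha / (k%:R) `^ (alpha - 1).
have C_ge0 : 0 <= C by rewrite /C /cost sumr_ge0 // => *; apply: powR_ge0.
have K_ge0 : 0 <= K by rewrite /K divr_ge0 // powR_ge0.
rewrite /rho_k; move: Hopt; rewrite /is_rho_opt; case: ifP => Hos Hopt.
  rewrite -/C; nra.
have a0 : alpha != 0 by apply/eqP => a0; rewrite a0 in a1; lra.
case: HZk => uZk subZ sizeZ maxZ.
have ZRE : forall p, p \in Zk -> zero_range P s rho_opt p.
  by move=> p /subZ; rewrite unfold_in.
set E := \sum_(p <- P | zero_range P s rho_opt p && (p \notin Zk)) st_range P s p `^ alpha.
have -> : cost alpha P (fun p => if p \in Zk then 0 else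
      if zero_range P s rho_opt p then st_range P s p else rho_opt p) = C + E.
  rewrite /C /cost /E [X in _ = _ + X]big_mkcond -big_split; apply: eq_bigr => p _ /=.
  case: ifP => pZ.
    by have := ZRE p pZ => /and4P [_ _ _ /eqP ->]; rewrite andbF addr0.
  case: ifP => Zp /=; last by rewrite addr0.
  by move: (Zp) => /and4P [_ _ _ /eqP ->]; rewrite powR0 // add0r.
suff : E <= K * C by nra.
case: (leqP (count (zero_range P s rho_opt) P) k) => hc.
  have sz : size Zk = size [seq x <- P | zero_range P s rho_opt x].
    by rewrite size_filter sizeZ; apply/minn_idPr.
  have sub : {subset Zk <= [seq x <- P | zero_range P s rho_opt x]}.
    move=> p pZ; rewrite mem_filter ZRE //; by case/and4P: (ZRE p pZ).
  have [_ eqZ] := uniq_min_size uZk sub (eq_leq (esym sz)).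
  rewrite /E big1_seq; first exact: mulr_ge0.
  move=> p /andP [/andP [Zp nZ] pP].
  by move: nZ; rewrite eqZ mem_filter Zp pP.
have sk : size Zk = k by rewrite sizeZ; apply/minn_idPl; exact: ltnW.
case: Hopt => [[[Hra _] _] [par [ps [Hbt [[psP _] [_ [Hch [_ [HchR HchL]]]]]]]]].
set rs := rho_opt ps.
have rs0 : 0 <= rs := Hra ps psP.
have Hint := zr_interval Hbt Hch HchR HchL psP rs0.
set T := \sum_(p <- P | zero_range P s rho_opt p) st_range P s p.
have st_ge0 : forall p, zero_range P s rho_opt p -> 0 <= st_range P s p.
  by move=> p Zp; apply/ltW/(st_gt0 Zp).
have HT : T <= 2 * rs.
  rewrite /T -big_filter (eq_bigr (fun z => hi P s z - lo P s z)); last by move=> *; rewrite hilo.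
  have := @gaps _ (lo P s) (hi P s) (size [seq x <- P | zero_range P s rho_opt x])
    [seq x <- P | zero_range P s rho_opt x] (ps - rs) (ps + rs) (leqnn _) (filter_uniq _ uP).
  have -> : ps + rs - (ps - rs) = 2 * rs by lra.
  apply.
  - lra.
  - by move=> z; rewrite mem_filter => /andP [Zz _]; apply: Hint.
  - move=> z y; rewrite !mem_filter => /andP [Zz _] /andP [Zy _]; move=> zy; exact: (disj Zz Zy zy).
have Hbound : forall p, zero_range P s rho_opt p -> p \notin Zk ->
    k%:R * st_range P s p <= 2 * rs.
  move=> p Zp nZ.
  have -> : k%:R * st_range P s p = \sum_(z <- Zk) st_range P s p.
    by rewrite big_const_seq iter_addr_0 count_predT sk mulr_natl.
  apply: le_trans HT.
  apply: (@le_trans _ _ (\sum_(z <- Zk) st_range P s z)).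
    by rewrite big_seq [X in _ <= X]big_seq; apply: ler_sum => z zZ; apply: maxZ.
  have -> : \sum_(z <- Zk) st_range P s z = \sum_(z <- P | z \in Zk) st_range P s z.
    rewrite -[RHS]big_filter; apply: perm_big; apply: uniq_perm => //; first exact: filter_uniq.
    move=> z; rewrite mem_filter; case zZ: (z \in Zk) => //=.
    by case/and4P: (ZRE z zZ).
  apply: ler_sum_cond => z; case zZ: (z \in Zk); first by rewrite (ZRE z zZ) lexx.
  by case: ifP => // Zz; apply: st_ge0.
set M := 2 * rs / k%:R.
have kpos : 0 < k%:R :> R by rewrite ltr0n.
have HM : forall p, zero_range P s rho_opt p -> p \notin Zk -> st_range P s p <= M.
  move=> p Zp nZ; rewrite /M ler_pdivlMr // mulrC; exact: Hbound.
have M0 : 0 <= M by rewrite /M divr_ge0 ?ler0n //; lra.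
have HE : E <= M `^ (alpha - 1) * T.
  rewrite /E /T mulr_sumr; apply: ler_sum_cond => p.
  case Zp: (zero_range P s rho_opt p) => //=.
  case pZ: (p \in Zk) => /=.
    by apply: mulr_ge0; [apply: powR_ge0 | apply: st_ge0].
  rewrite -mulr_powRB1 ?(st_ge0 _ Zp) //; last lra.
  rewrite [X in _ <= X]mulrC; apply: ler_wpM2l; first exact: st_ge0.
  apply: ge0_ler_powR; rewrite ?nnegrE ?(st_ge0 _ Zp) //; first lra.
  by apply: HM => //; rewrite pZ.
have HE2 : M `^ (alpha - 1) * T <= M `^ (alpha - 1) * (2 * rs).
  by apply: ler_wpM2l => //; apply: powR_ge0.
have Eq : M `^ (alpha - 1) * (2 * rs) = K * rs `^ alpha.
  have k0 : 0 <= k%:R :> R by rewrite ler0n.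
  rewrite /M /K powRM ?invr_ge0 //; last lra.
  have -> : (k%:R^-1) `^ (alpha - 1) = (k%:R `^ (alpha - 1))^-1.
    rewrite -(powR_inv1 k0) -powRAC powR_inv1 //; exact: powR_ge0.
  have e2 : (2 * rs) `^ (alpha - 1) * (2 * rs) = 2 `^ alpha * rs `^ alpha.
    rewrite mulrC mulr_powRB1 ?powRM //; lra.
  transitivity ((2 * rs) `^ (alpha - 1) * (2 * rs) * (k%:R `^ (alpha - 1))^-1); first ring.
  rewrite e2; ring.
have HC : rs `^ alpha <= C.
  rewrite /C /cost (bigD1_seq ps psP uP) /= lerDl; apply: sumr_ge0 => *; exact: powR_ge0.
have := ler_wpM2l K_ge0 HC; lra.
Qed.
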